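(* Let $K\subset\mathbb{R}$ be a real quadratic field with nontrivial automorphism $x\mapsto x'$, let $L\subset K$ be a pseudolattice, and for $t\in\mathbb{R}$ let $\Lambda_t(L)=\{le^{t/2}+il'e^{-t/2}: l\in L\}\subset\mathbb{C}$. Equip $\mathbb{C}$ with the pairing $(x\cdot y)=\mathrm{Im}(xy)=x_0y_1+x_1y_0$ for $x=x_0+ix_1$, $y=y_0+iy_1$, and set $\Lambda_t(L)^!=\{\mu\in\mathbb{C}:(\lambda\cdot\mu)\in\mathbb{Z}\ \text{for all }\lambda\in\Lambda_t(L)\}$. Let $M=L^?=\{m\in K:\mathrm{tr}_{K/\mathbb{Q}}(l'm)\in\mathbb{Z}\ \text{for all } l\in L\}$. Then $$\Lambda_t(L)^!=\Lambda_t(M)=\{me^{t/2}+im'e^{-t/2}: m\in M\}.$$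
   Context: A pseudolattice $L\subset K$ is a subgroup of $K$ that is free abelian of rank 2 and spans $K$ over $\mathbb{Q}$. *)

(* Defs.v *)
From HB Require Import structures.
From mathcomp Require Import all_boot all_order all_algebra.
From mathcomp Require Import all_classical all_reals all_analysis.
Unset Printing Implicit Defensive.
Import Order.TTheory GRing.Theory Num.Theory.
Local Open Scope ring_scope.

(* The real quadratic field K = Q(sqrt d) (d a positive non-square integer),
   elements represented by rational coordinates (a, b) <-> a + b sqrt d. *)
Definition QK := (rat * rat)%type.

Definition nonsquare (d : nat) : Prop := forall k : nat, (k * k != d)%N.

Definition zeroK : QK := (0, 0).
Definition addK (x y : QK) : QK := (x.1 + y.1, x.2 + y.2).
Definition oppK (x : QK) : QK := (- x.1, - x.2).
Definition scaleK (q : rat) (x : QK) : QK := (q * x.1, q * x.2).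
Definition mulK (d : nat) (x y : QK) : QK :=
  (x.1 * y.1 + d%:R * x.2 * y.2, x.1 * y.2 + x.2 * y.1).
Definition conjK (x : QK) : QK := (x.1, - x.2).
Definition trK (x : QK) : rat := 2 * x.1.

Definition embK (R : realType) (d : nat) (x : QK) : R :=
  ratr x.1 + ratr x.2 * Num.sqrt (d%:R : R).

Definition subgroupK (L : QK -> Prop) : Prop :=
  L zeroK /\ (forall x y, L x -> L y -> L (addK x (oppK y))).

Definition free_rank2 (L : QK -> Prop) : Prop :=
  exists w1 w2 : QK, L w1 /\ L w2 /\
    (forall x, L x -> exists m n : int,
        x = addK (scaleK m%:~R w1) (scaleK n%:~R w2)) /\
    (forall m n m' n' : int,
        addK (scaleK m%:~R w1) (scaleK n%:~R w2) =
        addK (scaleK m'%:~R w1) (scaleK n'%:~R w2) -> m = m' /\ n = n').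

Definition spansQ (L : QK -> Prop) : Prop :=
  forall x : QK, exists s : seq (rat * QK),
    (forall p, p \in s -> L p.2) /\
    x = foldr (fun p acc => addK (scaleK p.1 p.2) acc) zeroK s.

Definition pseudolattice (L : QK -> Prop) : Prop :=
  subgroupK L /\ free_rank2 L /\ spansQ L.

(* C represented as R * R, x = x.1 + i x.2 *)
Definition Lam (R : realType) (d : nat) (t : R) (l : QK) : R * R :=
  (embK R d l * expR (t / 2), embK R d (conjK l) * expR (- t / 2)).

Definition pairing (R : realType) (x y : R * R) : R := x.1 * y.2 + x.2 * y.1.

Definition Lam_dual (R : realType) (d : nat) (t : R) (L : QK -> Prop) (mu : R * R) : Prop :=
  forall l, L l -> pairing R (Lam R d t l) mu \is a Num.int.

Definition Ldual (d : nat) (L : QK -> Prop) (m : QK) : Prop :=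
  forall l, L l -> trK (mulK d (conjK l) m) \is a Num.int.

(* Main.v *)
Require Import Defs.
From HB Require Import structures.
From mathcomp Require Import all_boot all_order all_algebra.
From mathcomp Require Import all_classical all_reals all_analysis.
From mathcomp Require Import ring lra.
Import Order.TTheory GRing.Theory Num.Theory.
Local Open Scope ring_scope.

Lemma tr_emb (R : realType) d (w m : QK) :
  ratr (trK (mulK d (conjK w) m)) =
  embK R d w * embK R d (conjK m) + embK R d (conjK w) * embK R d m.
Proof.
rewrite /trK /mulK /conjK /embK /=.
rewrite !(rmorphD, rmorphM, rmorphN) /= !ratr_nat.
set s := Num.sqrt _.
have hs : s ^+ 2 = d%:R by rewrite sqr_sqrtr // ler0n.
rewrite -hs; ring.
Qed.

Lemma indep (w1 w2 : QK)
  (huniq : forall m n m' n' : int,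
        addK (scaleK m%:~R w1) (scaleK n%:~R w2) =
        addK (scaleK m'%:~R w1) (scaleK n'%:~R w2) -> m = m' /\ n = n')
  (q1 q2 : rat) : q1 * w1.1 + q2 * w2.1 = 0 -> q1 * w1.2 + q2 * w2.2 = 0 ->
  q1 = 0 /\ q2 = 0.
Proof.
move=> H1 H2.
have Heq : addK (scaleK (numq q1 * denq q2)%:~R w1) (scaleK (numq q2 * denq q1)%:~R w2)
  = addK (scaleK (0:int)%:~R w1) (scaleK (0:int)%:~R w2).
  rewrite /addK /scaleK /=; congr (_, _); rewrite !mulr0z !mul0r addr0 !intrM !numqE.
    by rewrite -[RHS](mul0r ((denq q1)%:~R * (denq q2)%:~R)) -H1; ring.
  by rewrite -[RHS](mul0r ((denq q1)%:~R * (denq q2)%:~R)) -H2; ring.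
have [h1 h2] := huniq _ _ _ _ Heq.
move/eqP: h1; rewrite mulf_eq0 (negbTE (denq_neq0 _)) orbF numq_eq0 => /eqP ->.
move/eqP: h2; rewrite mulf_eq0 (negbTE (denq_neq0 _)) orbF numq_eq0 => /eqP ->.
done.
Qed.

Theorem lemma4p8p1 (R : realType) (d : nat) (hd : nonsquare d)
    (L : QK -> Prop) (hL : pseudolattice L) (t : R) :
  forall mu : R * R,
    Lam_dual R d t L mu <-> exists m : QK, Ldual d L m /\ mu = Lam R d t m.
Proof.
move=> mu; split; last first.
  move=> [m [hm ->]] l hl.
  have := hm l hl => /intrP [z hz].
  rewrite /pairing /Lam /=.
  have hE : expR (t / 2) * expR (- t / 2) = 1 :> R.
    by rewrite -expRD mulNr addrN expR0.
  have -> : embK R d l * expR (t / 2) * (embK R d (conjK m) * expR (- t / 2)) +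
    embK R d (conjK l) * expR (- t / 2) * (embK R d m * expR (t / 2)) =
    (embK R d l * embK R d (conjK m) + embK R d (conjK l) * embK R d m) *
    (expR (t / 2) * expR (- t / 2)) by ring.
  by rewrite hE mulr1 -tr_emb hz ratr_int intr_int.
move=> hdual.
case: hL => _ [[[a b] [[c e] [hw1 [hw2 [hspan huniq]]]]] _].
have /intrP [z1 hz1] := hdual _ hw1.
have /intrP [z2 hz2] := hdual _ hw2.
have hD : a * e - b * c != 0.
  apply/eqP => hD0.
  have [he hb] := indep _ _ huniq e (-b) ltac:(simpl; rewrite -hD0; ring) ltac:(simpl; ring).
  have [hc ha] := indep _ _ huniq c (-a) ltac:(simpl; ring) ltac:(simpl; rewrite -oppr0 -hD0; ring).
  have := huniq 1 0 0 0.
  move/eqP: ha; move/eqP: hb; rewrite !oppr_eq0 => /eqP -> /eqP ->.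
  rewrite /addK /scaleK /= !mulr0 => /(_ erefl) [].
  done.
have hd0 : (d%:R : rat) != 0.
  rewrite pnatr_eq0 eq_sym; have := hd 0%N; by rewrite muln0.
have h20 : (2 : rat) != 0 by [].
pose A1 : rat := z1%:~R; pose A2 : rat := z2%:~R.
pose D := a * e - b * c.
pose x := (e * A1 - b * A2) / (2 * D).
pose y := (c * A1 - a * A2) / (2 * d%:R * D).
have hx1 : trK (mulK d (conjK (a, b)) (x, y)) = A1.
  rewrite /trK /mulK /conjK /= /x /y /D; field; rewrite ?hD ?hd0 //.
have hx2 : trK (mulK d (conjK (c, e)) (x, y)) = A2.
  rewrite /trK /mulK /conjK /= /x /y /D; field; rewrite ?hD ?hd0 //.
exists (x, y); split.
  move=> l hl; have [m [n ->]] := hspan l hl.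
  have -> : trK (mulK d (conjK (addK (scaleK m%:~R (a, b)) (scaleK n%:~R (c, e)))) (x, y))
    = m%:~R * trK (mulK d (conjK (a, b)) (x, y)) + n%:~R * trK (mulK d (conjK (c, e)) (x, y)).
    by rewrite /trK /mulK /conjK /addK /scaleK /=; ring.
  by rewrite hx1 hx2 rpredD // rpredM // intr_int.
have hE : expR (t / 2) * expR (- t / 2) = 1 :> R.
  by rewrite -expRD mulNr addrN expR0.
have key : forall w : QK, forall z : int, pairing R (Lam R d t w) mu = z%:~R ->
    trK (mulK d (conjK w) (x, y)) = z%:~R ->
    embK R d w * (expR (t / 2) * (mu.2 - embK R d (conjK (x, y)) * expR (- t / 2))) +
    embK R d (conjK w) * (expR (- t / 2) * (mu.1 - embK R d (x, y) * expR (t / 2))) = 0.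
  move=> w z hp ht.
  have := tr_emb R d w (x, y); rewrite ht ratr_int -hp /pairing /Lam /= => hq.
  transitivity (embK R d w * expR (t / 2) * mu.2 + embK R d (conjK w) * expR (- t / 2) * mu.1
    - (embK R d w * embK R d (conjK (x, y)) + embK R d (conjK w) * embK R d (x, y))
      * (expR (t / 2) * expR (- t / 2))); first by ring.
  by rewrite hE mulr1 -hq subrr.
have k1 := key _ _ hz1 hx1.
have k2 := key _ _ hz2 hx2.
move: k1 k2; rewrite /embK /conjK /= !rmorphN.
set X := expR (t / 2) * _; set Y := expR (- t / 2) * _.
set s := Num.sqrt _.
move=> k1 k2.
have hs : 0 < s.
  rewrite sqrtr_gt0 ltr0n lt0n; apply/eqP => h0.
  by move: hd0; rewrite h0 eqxx.
have hF : 2 * s * (ratr D : R) != 0.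
  have hr : (ratr D : R) != 0 by rewrite fmorph_eq0.
  by rewrite mulf_neq0 // mulf_neq0 ?gt_eqF // pnatr_eq0.
have hY : Y * (2 * s * ratr D) = 0.
  rewrite -[RHS](_ : (ratr c + ratr e * s) * 0 - (ratr a + ratr b * s) * 0 = 0); last by ring.
  rewrite -{1}k1 -k2 /D !(rmorphB, rmorphM) /=; ring.
have hX : X * (2 * s * ratr D) = 0.
  rewrite -[RHS](_ : (ratr a - ratr b * s) * 0 - (ratr c - ratr e * s) * 0 = 0); last by ring.
  rewrite -{1}k2 -k1 /D !(rmorphB, rmorphM) /=; ring.
move/eqP: hX; rewrite mulf_eq0 (negbTE hF) orbF /X mulf_eq0 gt_eqF ?expR_gt0 //= subr_eq0 => /eqP h2.
move/eqP: hY; rewrite mulf_eq0 (negbTE hF) orbF /Y mulf_eq0 gt_eqF ?expR_gt0 //= subr_eq0 => /eqP h1.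
rewrite /Lam /embK /conjK /= rmorphN -h1 -h2.
exact: surjective_pairing.
Qed.
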